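(* Fix a user association $\mathbf x=(x_{ij})$ with $x_{ij}\in\{0,1\}$ and $\sum_{i\in\mathcal I}x_{ij}=1$ for every $j\in\mathcal J$. Consider the load distribution and power control problem \[ \max_{\mathbf d,\mathbf p}\ \sum_{i\in\mathcal I}\sum_{j\in\mathcal J}\omega_j x_{ij}\log_2\!\left(d_i\log_2\!\left(1+\frac{p_i g_{ij}}{\sum_{k\in\mathcal I\setminus\{i\}}d_k p_k g_{kj}+\sigma^2}\right)\right)+C \] subject to $0\le d_i\le 1$ and $0\le p_i\le P_i$ for all $i\in\mathcal I$, where $C=\sum_{i\in\mathcal I}\sum_{j\in\mathcal J}\omega_j x_{ij}\log_2\!\big(KB\omega_j/\sum_{l\in\mathcal J}\omega_l x_{il}\big)$ is a constant, terms with $x_{ij}=0$ are taken to be $0$, and it is assumed that if either of $p_i$ and $d_i$ is $0$ then the other is $0$ as well. Then for each $i\in\mathcal I$, the optimal load satisfies $d_i^*=1$ if there exists at least one user $j$ with $x_{ij}=1$, and $d_i^*=0$ otherwise.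
   Context: $\mathcal I=\{1,\dots,I\}$ is the set of base stations and $\mathcal J=\{1,\dots,J\}$ the set of users; $x_{ij}=1$ means user $j$ is associated with base station $i$. $d_i$ is the load and $p_i$ the per-resource-block transmit power of base station $i$, with maximum power $P_i>0$. Constants $K,B>0$, channel gains $g_{ij}>0$, noise power $\sigma^2>0$ and user priorities $\omega_j>0$ are given. *)

(* Defs.v *)
From HB Require Import structures.
From mathcomp Require Import all_boot all_order all_algebra.
From mathcomp Require Import all_classical all_reals.
From mathcomp Require Import ereal exp.
Set Implicit Arguments. Unset Strict Implicit. Unset Printing Implicit Defensive.
Import Order.TTheory GRing.Theory Num.Theory.
Local Open Scope ring_scope.

Section LoadPower.
Variables (R : realType) (I J : nat).

Definition log2 (y : R) : R := ln y / ln 2.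

Definition log2e (y : R) : \bar R := if 0 < y then (log2 y)%:E else -oo%E.

Definition sinr (sigma2 : R) (g : 'I_I -> 'I_J -> R) (d p : 'I_I -> R)
    (i : 'I_I) (j : 'I_J) : R :=
  p i * g i j / (\sum_(k < I | k != i) d k * p k * g k j + sigma2).

Definition constC (K B : R) (w : 'I_J -> R) (x : 'I_I -> 'I_J -> bool) : R :=
  \sum_(i < I) \sum_(j < J)
     (if x i j then w j * log2 (K * B * w j / \sum_(l < J) w l * (x i l)%:R)
      else 0).

(* objective of the load distribution and power control problem, valued in
   the extended reals (log2 0 = -oo); terms with x_ij = 0 are 0 *)
Definition objective (K B sigma2 : R) (g : 'I_I -> 'I_J -> R) (w : 'I_J -> R)
    (x : 'I_I -> 'I_J -> bool) (d p : 'I_I -> R) : \bar R :=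
  ((\sum_(i < I) \sum_(j < J)
      (if x i j then (w j)%:E * log2e (d i * log2 (1 + sinr sigma2 g d p i j))
       else 0%E))
   + (constC K B w x)%:E)%E.

Definition feasible (P : 'I_I -> R) (d p : 'I_I -> R) : Prop :=
  forall i, [/\ 0 <= d i <= 1, 0 <= p i <= P i & (d i = 0 <-> p i = 0)].

Definition optimal (K B sigma2 : R) (P : 'I_I -> R) (g : 'I_I -> 'I_J -> R)
    (w : 'I_J -> R) (x : 'I_I -> 'I_J -> bool) (d p : 'I_I -> R) : Prop :=
  feasible P d p /\
  forall d' p', feasible P d' p' ->
    (objective K B sigma2 g w x d' p' <= objective K B sigma2 g w x d p)%E.

End LoadPower.

(* Main.v *)
Require Import Defs.
From HB Require Import structures.
From mathcomp Require Import all_boot all_order all_algebra.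
From mathcomp Require Import all_classical all_reals.
From mathcomp Require Import ereal exp.
From mathcomp Require Import sequences ring lra.
Import Order.TTheory GRing.Theory Num.Theory.
Local Open Scope ring_scope.
Lemma ln_strict (R : realType) (a s : R) : 0 < a < 1 -> 0 < s -> a * ln (1 + s) < ln (1 + a * s).
Proof.
move=> /andP[a0 a1] s0.
set c := ln (1 + s).
have c0 : 0 < c by apply: ln_gt0; lra.
have ec : expR c = 1 + s by rewrite /c lnK // posrE; lra.
set t0 := a * c.
have t0p : 0 < t0 by apply: mulr_gt0.
have t0c : t0 < c by rewrite /t0 -[X in _ < X]mul1r ltr_pM2r.
have tang : forall z, z != t0 -> expR t0 * (1 + (z - t0)) < expR z.
  move=> z hz; have -> : z = t0 + (z - t0) by ring.
  rewrite expRD addrAC subrr add0r ltr_pM2l ?expR_gt0 //.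
  by apply: expR_gt1Dx; rewrite subr_eq0.
have h0 := tang 0 (negbT (lt_eqF t0p)); rewrite expR0 in h0.
have h1 := tang c (negbT (gt_eqF t0c)); rewrite ec in h1.
set E := expR t0 in h0 h1 *.
have E0 : 0 < E by apply: expR_gt0.
have key : E < 1 + a * s.
  have q0 : 0 < (1 - a) * (1 - E * (1 + (0 - t0))) by apply: mulr_gt0; lra.
  have q1 : 0 < a * (1 + s - E * (1 + (c - t0))) by apply: mulr_gt0; lra.
  have : (1 - a) * (1 - E * (1 + (0 - t0))) + a * (1 + s - E * (1 + (c - t0))) = 1 + a * s - E.
    by rewrite /t0; ring.
  lra.
rewrite -[t0]expRK ltr_ln //; rewrite ?posrE //.
by have := mulr_gt0 a0 s0; lra.
Qed.

Section Proofs.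
Variables (R : realType) (I J : nat) (K B sigma2 : R)
    (P : 'I_I -> R) (g : 'I_I -> 'I_J -> R) (w : 'I_J -> R)
    (x : 'I_I -> 'I_J -> bool).
Hypotheses (hsigma2 : 0 < sigma2) (hg : forall i j, 0 < g i j)
  (hw : forall j, 0 < w j).

Definition den (d p : 'I_I -> R) i j :=
  \sum_(k < I | k != i) d k * p k * g k j + sigma2.

Definition arg (d p : 'I_I -> R) i j :=
  d i * log2 (1 + sinr sigma2 g d p i j).

Definition robj (d p : 'I_I -> R) :=
  \sum_(i < I) \sum_(j < J) (if x i j then w j * log2 (arg d p i j) else 0)
  + constC K B w x.

Lemma ln2_gt0 : 0 < ln (2 : R).
Proof. by apply: ln_gt0; lra. Qed.

Lemma log2_gt0 (y : R) : 1 < y -> 0 < log2 y.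
Proof. by move=> y1; rewrite /log2 divr_gt0 //; [apply: ln_gt0 | apply: ln2_gt0]. Qed.

Lemma ltr_log2 (a b : R) : 0 < a -> 0 < b -> (log2 a < log2 b) = (a < b).
Proof.
by move=> a0 b0; rewrite /log2 ltr_pM2r ?invr_gt0 ?ln2_gt0 // ltr_ln ?posrE.
Qed.

Lemma ler_log2 (a b : R) : 0 < a -> 0 < b -> (log2 a <= log2 b) = (a <= b).
Proof.
by move=> a0 b0; rewrite /log2 ler_pM2r ?invr_gt0 ?ln2_gt0 // ler_ln ?posrE.
Qed.

Lemma den_gt0 d p i j : feasible P d p -> 0 < den d p i j.
Proof.
move=> f; rewrite /den ltr_wpDl //; apply: sumr_ge0 => k _.
have [/andP[d0 _] /andP[p0 _] _] := f k.
by rewrite !mulr_ge0 // ltW.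
Qed.

Lemma sinrE d p i j : sinr sigma2 g d p i j = p i * g i j / den d p i j.
Proof. by []. Qed.

Lemma objE d p : (forall i j, x i j -> 0 < arg d p i j) ->
  objective K B sigma2 g w x d p = (robj d p)%:E.
Proof.
move=> H; rewrite /objective /robj EFinD; congr (_ + _)%E.
rewrite -sumEFin; apply: eq_bigr => i _; rewrite -sumEFin.
apply: eq_bigr => j _; case: ifP => // xij.
by rewrite /log2e -/(arg d p i j) (H i j xij).
Qed.

Lemma objNy d p i j : x i j -> arg d p i j <= 0 ->
  objective K B sigma2 g w x d p = -oo%E.
Proof.
move=> xij a0; rewrite /objective (bigD1 i) //= (bigD1 j) //= xij.
rewrite /log2e -/(arg d p i j) ifN; last by rewrite -leNgt.
by rewrite mulrNy gtr0_sg // mul1e !addNye.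
Qed.

Lemma improve d p d' p' :
  (forall d' p', feasible P d' p' ->
    (objective K B sigma2 g w x d' p' <= objective K B sigma2 g w x d p)%E) ->
  feasible P d' p' ->
  (forall i j, x i j -> 0 < arg d p i j) ->
  (forall i j, x i j -> arg d p i j <= arg d' p' i j) ->
  forall i0 j0, x i0 j0 -> arg d p i0 j0 < arg d' p' i0 j0 -> False.
Proof.
move=> opt f' pos le i0 j0 x0 lt0.
have pos' : forall i j, x i j -> 0 < arg d' p' i j.
  by move=> i j xij; apply: lt_le_trans (pos _ _ xij) (le _ _ xij).
have := opt d' p' f'; rewrite (@objE d p pos) (@objE d' p' pos') lee_fin /robj lerD2r.
apply/negP; rewrite -ltNge.
rewrite (bigD1 i0) //= [X in _ < X](bigD1 i0) //=.
apply: ltr_leD; last first.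
  apply: ler_sum => i _; apply: ler_sum => j _; case: ifP => // xij.
  by rewrite ler_pM2l // ler_log2 ?pos ?pos' ?le.
rewrite (bigD1 j0) //= [X in _ < X](bigD1 j0) //= x0.
apply: ltr_leD; first by rewrite ltr_pM2l // ltr_log2 ?pos ?pos'.
apply: ler_sum => j _; case: ifP => // xij.
by rewrite ler_pM2l // ler_log2 ?pos ?pos' ?le.
Qed.


Lemma sinr_ge0 d p i j : feasible P d p -> 0 <= sinr sigma2 g d p i j.
Proof.
move=> f; have [_ /andP[p0 _] _] := f i.
apply: divr_ge0; first by rewrite mulr_ge0 // ltW.
exact: ltW (den_gt0 _ _ _ _ f).
Qed.

Lemma sinr_gt0 d p i j : feasible P d p -> 0 < p i -> 0 < sinr sigma2 g d p i j.
Proof. by move=> f p0; rewrite sinrE divr_gt0 ?mulr_gt0 ?den_gt0. Qed.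

Lemma onesinr_gt0 d p i j : feasible P d p -> 0 < 1 + sinr sigma2 g d p i j.
Proof. by move=> f; have := sinr_ge0 d p i j f; lra. Qed.

Hypotheses (hJ : (0 < J)%N) (hP : forall i, 0 < P i)
  (hx : forall j, (\sum_(i < I) (x i j : nat))%N = 1%N).

Lemma main d p : optimal K B sigma2 P g w x d p ->
  forall i, d i = if [exists j, x i j] then 1 else 0.
Proof.
move=> [f opt] i.
pose d1 : 'I_I -> R := fun=> 1.
have f1 : feasible P d1 P.
  move=> k; split; first by rewrite /d1 ler01 lexx.
    by rewrite lexx andbT ltW.
  split=> h; first by move: (@oner_neq0 R); rewrite /d1 in h; rewrite h eqxx.
  by move: (hP k); rewrite h ltxx.
have pos1 : forall k j, x k j -> 0 < arg d1 P k j.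
  by move=> k j _; rewrite /arg /d1 mul1r log2_gt0 // ltrDl sinr_gt0.
have pos : forall k j, x k j -> 0 < arg d p k j.
  move=> k j xkj; rewrite ltNge; apply/negP => h.
  by have := opt d1 P f1; rewrite (@objNy d p k j xkj h) (@objE d1 P pos1) leeNy_eq.
have dpos : forall k j, x k j -> 0 < d k /\ 0 < p k.
  move=> k j xkj; have [/andP[d0 _] /andP[p0 _] iff] := f k.
  have dk : d k != 0.
    by apply/eqP => dk0; have := pos k j xkj; rewrite /arg dk0 mul0r ltxx.
  have pk : p k != 0.
    by apply/eqP => /(proj2 iff) dk0; rewrite dk0 eqxx in dk.
  by split; rewrite lt0r ?dk ?pk.
case: ifP => [/existsP[j0 x0] | nox].
  have [d0 p0] := dpos i j0 x0.
  have [/andP[_ d1le] /andP[_ pP] _] := f i.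
  apply/eqP; rewrite eq_le d1le /= leNgt; apply/negP => dlt1.
  pose d' := fun k => if k == i then 1 else d k.
  pose p' := fun k => if k == i then d i * p i else p k.
  have dp' : forall k, d' k * p' k = d k * p k.
    by move=> k; rewrite /d' /p'; case: eqP => [->|]; rewrite ?mul1r.
  have den' : forall k j, den d' p' k j = den d p k j.
    by move=> k j; rewrite /den; congr (_ + _); apply: eq_bigr => k' _; rewrite dp'.
  have f' : feasible P d' p'.
    move=> k; rewrite /d' /p'; case: eqP => [->|_]; last exact: f k.
    split; first by rewrite ler01 lexx.
      apply/andP; split; first by rewrite mulr_ge0 // ltW.
      by apply: (le_trans _ pP); rewrite ler_piMl ?ltW.
    split=> h; first by move: (@oner_neq0 R); rewrite h eqxx.
    by move: (mulr_gt0 d0 p0); rewrite h ltxx.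
  have strict : arg d p i j0 < arg d' p' i j0.
    rewrite /arg !sinrE den' /d' /p' eqxx mul1r.
    have -> : d i * p i * g i j0 / den d p i j0 =
              d i * (p i * g i j0 / den d p i j0) by rewrite !mulrA.
    rewrite /log2 mulrA ltr_pM2r ?invr_gt0 ?ln2_gt0 //; apply: ln_strict.
      by rewrite d0 dlt1.
    by rewrite divr_gt0 ?mulr_gt0 ?den_gt0.
  have le : forall k j, x k j -> arg d p k j <= arg d' p' k j.
    move=> k j xkj; have [eki|nki] := eqVneq k i.
      subst k.
      have [ej|nj] := eqVneq j j0; first by subst j; apply: ltW.
      rewrite /arg !sinrE den' /d' /p' eqxx mul1r.
      have -> : d i * p i * g i j / den d p i j =
                d i * (p i * g i j / den d p i j) by rewrite !mulrA.
      rewrite /log2 mulrA ler_pM2r ?invr_gt0 ?ln2_gt0 //; apply: ltW; apply: ln_strict.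
        by rewrite d0 dlt1.
      by rewrite divr_gt0 ?mulr_gt0 ?den_gt0.
    by rewrite /arg !sinrE den' /d' /p' (negbTE nki).
  exact: (@improve d p d' p' opt f' pos le _ _ x0 strict).
have [/andP[d0 _] /andP[p0' _] iff] := f i.
apply/eqP; rewrite eq_le andbC d0 /= leNgt; apply/negP => dpos'.
have pi0 : 0 < p i.
  rewrite lt0r p0' andbT; apply/eqP => /(proj2 iff) h.
  by rewrite h ltxx in dpos'.
have noxi : forall j, x i j = false.
  move=> j; apply/negbTE; move/negbT: nox; rewrite negb_exists => /forallP; apply.
pose j0 : 'I_J := Ordinal hJ.
have [k0 xk0] : exists k, x k j0.
  case: (pickP (fun k => x k j0)) => [k0 xk0|none]; first by exists k0.
  by have := hx j0; rewrite big1 // => k _; rewrite none.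
pose d' := fun k => if k == i then 0 else d k.
pose p' := fun k => if k == i then 0 else p k.
have f' : feasible P d' p'.
  move=> k; rewrite /d' /p'; case: eqP => [_|_]; last exact: f k.
  split; first by rewrite lexx ler01.
    by rewrite lexx ltW.
  by [].
have kneq : forall k j, x k j -> k != i.
  by move=> k j xkj; apply/eqP => eki; rewrite eki noxi in xkj.
have denE : forall k j, k != i -> den d p k j = den d' p' k j + d i * p i * g i j.
  move=> k j nki; rewrite /den (bigD1 i) 1?eq_sym //= [in RHS](bigD1 i) 1?eq_sym //=.
  rewrite /d' /p' eqxx !mul0r add0r.
  have -> : \sum_(k' < I | (k' != k) && (k' != i)) d k' * p k' * g k' j =
            \sum_(k' < I | (k' != k) && (k' != i))
               (if k' == i then 0 else d k') * (if k' == i then 0 else p k') * g k' j.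
    by apply: eq_bigr => k' /andP[_ hk']; rewrite (negbTE hk').
  lra.
have strict : forall k j, x k j -> arg d p k j < arg d' p' k j.
  move=> k j xkj; have nki := kneq k j xkj.
  have [dk pk] := dpos k j xkj.
  have ed : d' k = d k by rewrite /d' (negbTE nki).
  have ep : p' k = p k by rewrite /p' (negbTE nki).
  rewrite /arg ed ltr_pM2l // ltr_log2 ?onesinr_gt0 // ltrD2l !sinrE ep.
  rewrite (denE k j nki) ltr_pM2l ?mulr_gt0 // ltf_pV2 ?posrE ?den_gt0 //.
    by rewrite ltrDl !mulr_gt0.
  by rewrite ltr_wpDr ?den_gt0 // !mulr_ge0 ?ltW.
apply: (@improve d p d' p' opt f' pos _ _ _ xk0 (strict k0 j0 xk0)).
by move=> k j xkj; apply: ltW; apply: strict.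
Qed.

End Proofs.

Theorem lemma1 (R : realType) (I J : nat) (K B sigma2 : R)
    (P : 'I_I -> R) (g : 'I_I -> 'I_J -> R) (w : 'I_J -> R)
    (x : 'I_I -> 'I_J -> bool)
    (hJ : (0 < J)%N)
    (hK : 0 < K) (hB : 0 < B) (hsigma2 : 0 < sigma2)
    (hP : forall i, 0 < P i) (hg : forall i j, 0 < g i j) (hw : forall j, 0 < w j)
    (hx : forall j, (\sum_(i < I) (x i j : nat))%N = 1%N)
    (d p : 'I_I -> R) :
  optimal K B sigma2 P g w x d p ->
  forall i : 'I_I, d i = if [exists j, x i j] then 1 else 0.
Proof. move=> H; eapply main; eassumption. Qed.
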